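(* Consider the planar Problem B with $w=e=(0,1)$ (see context). If $(\rho,C_r,C_b,\varphi)$ is a local solution on $[-\delta,\delta]$, let $\rho_0=\rho(0)$ and $d_0=d_r(0)\,(=d_b(0))$ and $k_0=\rho_0/d_0$. Then $$k_0\le\frac{(\Delta_r-\Delta_b)^2}{4\Delta_r\Delta_b},\qquad \Delta_r=\frac{n_r}{n_r-1},\ \Delta_b=\frac{n_b}{n_b-1}.$$ In other words, if $k_0>\frac{(\Delta_r-\Delta_b)^2}{4\Delta_r\Delta_b}$ there is no local solution with these values of $\rho(0)$ and $d_r(0)$.
   Context: Planar setting: $x(t)=(\sin t,\cos t)$, $e=(0,1)$; refractive indices $n_b>n_r>1$, outside vacuum; $\Phi_\kappa(s)=s-\sqrt{\kappa^2-1+s^2}$. For positive $\rho\in C^2$, the curve $\rho(t)x(t)$ has outer unit normal $\nu_\rho(t)=\dfrac{(\rho\sin t-\rho'\cos t,\ \rho'\sin t+\rho\cos t)}{\sqrt{\rho^2+\rho'^2}}$. For $c\in\{r,b\}$ and a constant $C_c$: $m_c(t)=\frac1{n_c}\big(x(t)-\Phi_{n_c}(x(t)\cdot\nu_\rho(t))\nu_\rho(t)\big)$, $d_c(t)=\dfrac{C_c-\rho(t)(1-\cos t)}{n_c-e\cdot m_c(t)}$, $f_c(t)=\rho(t)x(t)+d_c(t)m_c(t)$; the curve $f_c$ refracts the color-$c$ ray $m_c(t)$ at $f_c(t)$ into $e$ by Snell's law. A local solution of Problem B: $\delta\in(0,\pi/2)$, positive $\rho\in C^2[-\delta,\delta]$,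 constants $C_r,C_b$ with $d_r,d_b>0$ and $f_r,f_b$ having a normal at every point, and a $C^1$ map $\varphi:[-\delta,\delta]\to[-\delta,\delta]$ with $f_r(t)=f_b(\varphi(t))$ for all $|t|\le\delta$. *)

(* Defs.v *)
From Stdlib Require Import Reals.
Open Scope R_scope.

Definition Icl (delta t : R) : Prop := - delta <= t <= delta.

Definition deriv_within (D : R -> Prop) (f : R -> R) (x l : R) : Prop :=
  forall eps : R, 0 < eps -> exists del : R, 0 < del /\
    forall h : R, h <> 0 -> Rabs h < del -> D (x + h) ->
      Rabs ((f (x + h) - f x) / h - l) < eps.

Definition cont_within (D : R -> Prop) (f : R -> R) (x : R) : Prop :=
  forall eps : R, 0 < eps -> exists del : R, 0 < del /\
    forall y : R, D y -> Rabs (y - x) < del -> Rabs (f y - f x) < eps.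

Definition C1_on (D : R -> Prop) (f f1 : R -> R) : Prop :=
  (forall t, D t -> deriv_within D f t (f1 t)) /\
  (forall t, D t -> cont_within D f1 t).

Definition C2_on (D : R -> Prop) (f f1 f2 : R -> R) : Prop :=
  (forall t, D t -> deriv_within D f t (f1 t)) /\ C1_on D f1 f2.

Definition Phi (kappa s : R) : R := s - sqrt (kappa ^ 2 - 1 + s ^ 2).

(* Outer unit normal of the curve rho(t) x(t), x(t) = (sin t, cos t);
   rho1 is rho'. *)
Definition nu (rho rho1 : R -> R) (t : R) : R * R :=
  let s := sqrt (rho t ^ 2 + rho1 t ^ 2) in
  ((rho t * sin t - rho1 t * cos t) / s,
   (rho1 t * sin t + rho t * cos t) / s).

Definition mc (n : R) (rho rho1 : R -> R) (t : R) : R * R :=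
  let nv := nu rho rho1 t in
  let p := sin t * fst nv + cos t * snd nv in
  ((sin t - Phi n p * fst nv) / n, (cos t - Phi n p * snd nv) / n).

(* d_c(t) = (C - rho(t)(1 - cos t)) / (n - e . m_c(t)), e = (0,1). *)
Definition dc (n C : R) (rho rho1 : R -> R) (t : R) : R :=
  (C - rho t * (1 - cos t)) / (n - snd (mc n rho rho1 t)).

Definition fc (n C : R) (rho rho1 : R -> R) (t : R) : R * R :=
  (rho t * sin t + dc n C rho rho1 t * fst (mc n rho rho1 t),
   rho t * cos t + dc n C rho rho1 t * snd (mc n rho rho1 t)).

(* The curve f_c has a normal at every point of D: it is differentiable
   (componentwise, relative to D) with a nonzero tangent vector. *)
Definition has_normal_everywhere (D : R -> Prop) (g : R -> R * R) : Prop :=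
  forall t, D t -> exists v1 v2 : R,
    deriv_within D (fun s => fst (g s)) t v1 /\
    deriv_within D (fun s => snd (g s)) t v2 /\
    (v1 <> 0 \/ v2 <> 0).

Definition local_solution (nr nb delta : R) (rho rho1 rho2 : R -> R)
    (Cr Cb : R) (phi phi1 : R -> R) : Prop :=
  0 < delta < PI / 2 /\
  (forall t, Icl delta t -> 0 < rho t) /\
  C2_on (Icl delta) rho rho1 rho2 /\
  (forall t, Icl delta t -> 0 < dc nr Cr rho rho1 t) /\
  (forall t, Icl delta t -> 0 < dc nb Cb rho rho1 t) /\
  has_normal_everywhere (Icl delta) (fc nr Cr rho rho1) /\
  has_normal_everywhere (Icl delta) (fc nb Cb rho rho1) /\
  (forall t, Icl delta t -> Icl delta (phi t)) /\
  C1_on (Icl delta) phi phi1 /\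
  (forall t, Icl delta t -> fc nr Cr rho rho1 t = fc nb Cb rho rho1 (phi t)).

Definition DeltaN (n : R) : R := n / (n - 1).

(* Main.v *)
Require Import Defs.
From Stdlib Require Import Reals Lra.
Open Scope R_scope.

Definition Dx (D : R -> Prop) (x : R) := fun y => D y /\ y <> x.
Definition slope (f : R -> R) (x y : R) := (f y - f x) / (y - x).

Lemma dw_iff D f x l : deriv_within D f x l <-> limit1_in (slope f x) (Dx D x) l x.
Proof.
  split.
  - intros H eps Heps. destruct (H eps Heps) as [del [Hd H']]. exists del. split; [lra|].
    intros y [[Dy Ny] Hy]. simpl in *. unfold R_dist in *.
    specialize (H' (y - x)). replace (x + (y-x)) with y in H' by ring. unfold slope.
    apply H'; auto. intro; apply Ny; lra.
  - intros H eps Heps. destruct (H eps Heps) as [del [Hd H']]. exists del. split; [lra|].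
    intros h Hh Hh2 Dh. specialize (H' (x + h)). simpl in H'. unfold R_dist, slope in H'.
    replace (x + h - x) with h in H' by ring. apply H'. split; [split; auto; intro; apply Hh; lra|].
    replace (x + h - x) with h by ring. auto.
Qed.

Lemma lim_ext (f g : R -> R) D l x : (forall y, D y -> f y = g y) -> limit1_in f D l x -> limit1_in g D l x.
Proof.
  intros E H eps Heps. destruct (H eps Heps) as [a [Ha H']]. exists a. split; auto.
  intros y [Dy Hy]. rewrite <- E; auto.
Qed.

Lemma lim_eq f D l l' x : l = l' -> limit1_in f D l x -> limit1_in f D l' x.
Proof. intros ->; auto. Qed.

Lemma lim_const D a x : limit1_in (fun _ => a) D a x.
Proof. intros eps He. exists 1. split; [lra|]. intros y _. simpl. unfold R_dist. rewrite Rminus_diag, Rabs_R0. lra. Qed.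

Lemma lim_id D x : limit1_in (fun y => y) D x x.
Proof. intros eps He. exists eps. split; [lra|]. intros y [_ H]. exact H. Qed.

Lemma dw_cont D f x l : deriv_within D f x l -> limit1_in f (Dx D x) (f x) x.
Proof.
  intro H. apply dw_iff in H.
  assert (H2 : limit1_in (fun y => f x + slope f x y * (y - x)) (Dx D x) (f x + l * (x - x)) x).
  { apply limit_plus. apply lim_const. apply limit_mul; auto. apply limit_minus. apply lim_id. apply lim_const. }
  replace (f x + l * (x - x)) with (f x) in H2 by ring.
  eapply lim_ext; [|exact H2]. intros y [_ Hy]. unfold slope. field. intro; apply Hy; lra.
Qed.

Lemma dw_ext D f g x l : (forall y, D y -> f y = g y) -> D x -> deriv_within D f x l -> deriv_within D g x l.
Proof.
  intros E Dx0 H eps He. destruct (H eps He) as [d [Hd H']]. exists d. split; auto.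
  intros h Hh Hh2 Dh. rewrite <- !E; auto.
Qed.

Lemma dw_eq D f x l l' : l = l' -> deriv_within D f x l -> deriv_within D f x l'.
Proof. intros ->; auto. Qed.

Lemma dw_glob D g x l : derivable_pt_lim g x l -> deriv_within D g x l.
Proof.
  intros H eps He. destruct (H eps He) as [d H']. exists d. split; [apply cond_pos|].
  intros h Hh Hh2 _. apply H'; auto.
Qed.

Lemma dw_const D a x : deriv_within D (fun _ => a) x 0.
Proof.
  intros eps He. exists 1. split; [lra|]. intros h Hh _ _.
  unfold Rminus. rewrite Rplus_opp_r. unfold Rdiv. rewrite Rmult_0_l, Rplus_0_l, Ropp_0, Rabs_R0. lra.
Qed.

Lemma dw_id D x : deriv_within D (fun y => y) x 1.
Proof.
  intros eps He. exists 1. split; [lra|]. intros h Hh _ _.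
  replace ((x + h - x) / h - 1) with 0 by (field; auto). rewrite Rabs_R0. lra.
Qed.

Lemma dw_plus D f g x lf lg : deriv_within D f x lf -> deriv_within D g x lg ->
  deriv_within D (fun y => f y + g y) x (lf + lg).
Proof.
  rewrite !dw_iff. intros Hf Hg. eapply lim_ext; [|apply limit_plus; [exact Hf|exact Hg]].
  intros y [_ Hy]. unfold slope. field. intro; apply Hy; lra.
Qed.

Lemma dw_opp D f x lf : deriv_within D f x lf -> deriv_within D (fun y => - f y) x (- lf).
Proof.
  rewrite !dw_iff. intros Hf. eapply lim_ext; [|apply limit_Ropp; exact Hf].
  intros y [_ Hy]. unfold slope. field. intro; apply Hy; lra.
Qed.

Lemma dw_minus D f g x lf lg : deriv_within D f x lf -> deriv_within D g x lg ->
  deriv_within D (fun y => f y - g y) x (lf - lg).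
Proof.
  rewrite !dw_iff. intros Hf Hg. eapply lim_ext; [|apply limit_minus; [exact Hf|exact Hg]].
  intros y [_ Hy]. unfold slope. field. intro; apply Hy; lra.
Qed.

Lemma dw_mult D f g x lf lg : deriv_within D f x lf -> deriv_within D g x lg ->
  deriv_within D (fun y => f y * g y) x (lf * g x + f x * lg).
Proof.
  intros Hf Hg. pose proof (dw_cont _ _ _ _ Hf) as Cf. rewrite dw_iff in *.
  assert (H := limit_plus _ _ _ _ _ _ (limit_mul _ _ _ _ _ _ Hf (lim_const (Dx D x) (g x) x))
     (limit_mul _ _ _ _ _ _ Cf Hg)).
  eapply lim_ext; [|exact H]. intros y [_ Hy]. unfold slope. field. intro; apply Hy; lra.
Qed.

Lemma dw_inv D f x lf : (forall y, D y -> f y <> 0) -> f x <> 0 -> deriv_within D f x lf ->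
  deriv_within D (fun y => / f y) x (- lf / (f x * f x)).
Proof.
  intros Nz Nx Hf. pose proof (dw_cont _ _ _ _ Hf) as Cf. rewrite dw_iff in *.
  assert (H := limit_mul _ _ _ _ _ _ (limit_Ropp _ _ _ _ Hf)
               (limit_mul _ _ _ _ _ _ (limit_inv _ _ _ _ Cf Nx) (lim_const (Dx D x) (/ f x) x))).
  eapply lim_eq; [|eapply lim_ext; [|exact H]].
  - field; auto.
  - intros y [Dy Hy]. unfold slope. field. repeat split; auto. intro; apply Hy; lra.
Qed.

Lemma dw_chain D E g f x lg lf : (forall y, D y -> E (f y)) -> D x ->
  deriv_within E g (f x) lg -> deriv_within D f x lf ->
  deriv_within D (fun y => g (f y)) x (lg * lf).
Proof.
  intros DE Dx0 Hg Hf. pose proof (dw_cont _ _ _ _ Hf) as Cf.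
  set (a := f x) in *.
  set (G := fun u => match Req_dec_T u a with left _ => lg | right _ => (g u - g a) / (u - a) end).
  assert (CG : limit1_in (fun y => G (f y)) (Dx D x) lg x).
  { intros eps He. destruct (Hg eps He) as [d1 [Hd1 H1]].
    destruct (Cf d1 Hd1) as [d2 [Hd2 H2]]. exists d2. split; auto.
    intros y [[Dy Ny] Hy]. simpl. unfold R_dist. unfold G.
    destruct (Req_dec_T (f y) a) as [e|ne].
    - rewrite Rminus_diag, Rabs_R0. lra.
    - specialize (H1 (f y - a)). replace (a + (f y - a)) with (f y) in H1 by ring.
      apply H1.
      + intro; apply ne; lra.
      + specialize (H2 y (conj (conj Dy Ny) Hy)). simpl in H2. unfold R_dist in H2. exact H2.
      + apply DE; auto. }
  rewrite dw_iff in *.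
  eapply lim_ext; [|exact (limit_mul _ _ _ _ _ _ CG Hf)].
  intros y [Dy Hy]. unfold slope, G. fold a.
  destruct (Req_dec_T (f y) a) as [e|ne].
  - rewrite e. replace (g a - g a) with 0 by ring. replace (a - a) with 0 by ring. unfold Rdiv. ring.
  - field. split; intro; [apply ne|apply Hy]; lra.
Qed.

Lemma dw_comp D g f x lg lf : D x -> derivable_pt_lim g (f x) lg -> deriv_within D f x lf ->
  deriv_within D (fun y => g (f y)) x (lg * lf).
Proof.
  intros Dx0 Hg Hf. apply (dw_chain D (fun _ => True)); auto.
  apply dw_glob; auto.
Qed.

Lemma dw_unique delta f x l1 l2 : 0 < delta -> Icl delta x ->
  deriv_within (Icl delta) f x l1 -> deriv_within (Icl delta) f x l2 -> l1 = l2.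
Proof.
  intros Hd Hx H1 H2. rewrite dw_iff in *. eapply single_limit; [|exact H1|exact H2].
  intros alp Ha. unfold Icl in *.
  set (m := Rmin alp delta / 2).
  assert (Hm : 0 < m /\ m < alp /\ m < delta).
  { unfold m. pose proof (Rmin_l alp delta). pose proof (Rmin_r alp delta).
    pose proof (Rmin_glb_lt alp delta 0 Ha Hd). lra. }
  destruct (Rle_lt_dec 0 x) as [Px|Nx].
  - exists (x - m). split; [split; [lra|lra]|]. simpl. unfold R_dist.
    replace (x - m - x) with (- m) by ring. rewrite Rabs_Ropp, Rabs_pos_eq; lra.
  - exists (x + m). split; [split; [lra|lra]|]. simpl. unfold R_dist.
    replace (x + m - x) with m by ring. rewrite Rabs_pos_eq; lra.
Qed.

Definition Sq (rho rho1 : R -> R) y := sqrt (rho y ^ 2 + rho1 y ^ 2).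
Definition NX (rho rho1 : R -> R) y := rho y * sin y - rho1 y * cos y.
Definition NY (rho rho1 : R -> R) y := rho1 y * sin y + rho y * cos y.
Definition nux rho rho1 y := NX rho rho1 y / Sq rho rho1 y.
Definition nuy rho rho1 y := NY rho rho1 y / Sq rho rho1 y.
Definition PP rho rho1 y := rho y / Sq rho rho1 y.
Definition Ph n rho rho1 y := PP rho rho1 y - sqrt (n ^ 2 - 1 + PP rho rho1 y ^ 2).
Definition mx n rho rho1 y := (sin y - Ph n rho rho1 y * nux rho rho1 y) / n.
Definition my n rho rho1 y := (cos y - Ph n rho rho1 y * nuy rho rho1 y) / n.


Lemma Sq_pos rho rho1 y : 0 < rho y -> 0 < Sq rho rho1 y.
Proof. intro H. unfold Sq. apply sqrt_lt_R0. nra. Qed.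

Lemma Sq_sq rho rho1 y : Sq rho rho1 y * Sq rho rho1 y = rho y ^ 2 + rho1 y ^ 2.
Proof. unfold Sq. apply sqrt_sqrt. nra. Qed.

Lemma nu_unit rho rho1 y : 0 < rho y -> nux rho rho1 y ^ 2 + nuy rho rho1 y ^ 2 = 1.
Proof.
  intro H. pose proof (Sq_pos rho rho1 y H) as H0. pose proof (Sq_sq rho rho1 y) as H1.
  unfold nux, nuy.
  replace ((NX rho rho1 y / Sq rho rho1 y) ^ 2 + (NY rho rho1 y / Sq rho rho1 y) ^ 2)
    with ((NX rho rho1 y ^ 2 + NY rho rho1 y ^ 2) / (Sq rho rho1 y * Sq rho rho1 y)) by (field; lra).
  rewrite H1. unfold NX, NY.
  replace ((rho y * sin y - rho1 y * cos y) ^ 2 + (rho1 y * sin y + rho y * cos y) ^ 2)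
    with ((rho y ^ 2 + rho1 y ^ 2) * (sin y ^ 2 + cos y ^ 2)) by ring.
  pose proof (sin2_cos2 y) as E. unfold Rsqr in E. replace (sin y ^ 2 + cos y ^ 2) with 1 by (rewrite <- E; ring).
  field. nra.
Qed.

Lemma PP_eq rho rho1 y : 0 < rho y ->
  sin y * nux rho rho1 y + cos y * nuy rho rho1 y = PP rho rho1 y.
Proof.
  intro H. pose proof (Sq_pos rho rho1 y H). unfold nux, nuy, NX, NY, PP.
  pose proof (sin2_cos2 y) as E. unfold Rsqr in E.
  replace (rho y) with (rho y * (sin y * sin y + cos y * cos y)) at 3 by (rewrite E; ring).
  field. lra.
Qed.

Lemma nu_eq rho rho1 y : nu rho rho1 y = (nux rho rho1 y, nuy rho rho1 y).
Proof. reflexivity. Qed.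

Lemma mc_eq n rho rho1 y : 0 < rho y -> mc n rho rho1 y = (mx n rho rho1 y, my n rho rho1 y).
Proof.
  intro H. unfold mc. rewrite nu_eq. cbv zeta. simpl fst; simpl snd.
  rewrite PP_eq by auto. reflexivity.
Qed.

Lemma PP_bounds rho rho1 y : 0 < rho y -> 0 < PP rho rho1 y <= 1.
Proof.
  intro H. pose proof (Sq_pos rho rho1 y H). pose proof (Sq_sq rho rho1 y). unfold PP.
  split. apply Rdiv_lt_0_compat; lra.
  apply Rmult_le_reg_r with (Sq rho rho1 y); auto. unfold Rdiv. rewrite Rmult_assoc, Rinv_l by lra.
  nra.
Qed.

Lemma m_unit n rho rho1 y : 1 < n -> 0 < rho y -> mx n rho rho1 y ^ 2 + my n rho rho1 y ^ 2 = 1.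
Proof.
  intros Hn H. pose proof (nu_unit rho rho1 y H) as U. pose proof (PP_eq rho rho1 y H) as P.
  pose proof (PP_bounds rho rho1 y H) as B.
  set (p := PP rho rho1 y) in *.
  assert (R2 : sqrt (n ^ 2 - 1 + p ^ 2) * sqrt (n ^ 2 - 1 + p ^ 2) = n ^ 2 - 1 + p ^ 2) by (apply sqrt_sqrt; nra).
  unfold mx, my, Ph. fold p. set (R := sqrt (n ^ 2 - 1 + p ^ 2)) in *.
  set (a := nux rho rho1 y) in *. set (b := nuy rho rho1 y) in *.
  pose proof (sin2_cos2 y) as E. unfold Rsqr in E.
  apply Rmult_eq_reg_l with (n ^ 2); [|nra].
  replace (n ^ 2 * (((sin y - (p - R) * a) / n) ^ 2 + ((cos y - (p - R) * b) / n) ^ 2))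
    with ((sin y * sin y + cos y * cos y) - 2 * (p - R) * (sin y * a + cos y * b) + (p - R) ^ 2 * (a ^ 2 + b ^ 2))
    by (field; lra).
  rewrite E, U, P. nra.
Qed.

Lemma my_lt n rho rho1 y : 1 < n -> 0 < rho y -> my n rho rho1 y < n.
Proof. intros Hn H. pose proof (m_unit n rho rho1 y Hn H). nra. Qed.

Lemma tangent_id n rho rho1 y : 1 < n -> 0 < rho y ->
  n * (mx n rho rho1 y * (rho1 y * sin y + rho y * cos y) + my n rho rho1 y * (rho1 y * cos y - rho y * sin y)) = rho1 y.
Proof.
  intros Hn H. pose proof (Sq_pos rho rho1 y H). pose proof (sin2_cos2 y) as E. unfold Rsqr in E.
  unfold mx, my, nux, nuy, NX, NY.
  set (F := Ph n rho rho1 y). set (S := Sq rho rho1 y).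
  transitivity (rho1 y * (sin y * sin y + cos y * cos y)); [field| rewrite E; ring].
  unfold S; split; lra.
Qed.

Definition HYP (D : R -> Prop) (rho rho1 rho2 : R -> R) :=
  (forall t, D t -> deriv_within D rho t (rho1 t)) /\
  (forall t, D t -> deriv_within D rho1 t (rho2 t)) /\
  (forall t, D t -> 0 < rho t).

Ltac fin H := eapply dw_eq; [| eapply dw_ext; [| | exact H]]; cbv beta.

Definition dSq rho rho1 rho2 t := (rho t * rho1 t + rho1 t * rho2 t) / Sq rho rho1 t.
Definition dNX (rho rho1 rho2 : R -> R) t := rho1 t * sin t + rho t * cos t - (rho2 t * cos t - rho1 t * sin t).
Definition dNY (rho rho1 rho2 : R -> R) t := rho2 t * sin t + rho1 t * cos t + (rho1 t * cos t - rho t * sin t).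

Lemma d_Sq D rho rho1 rho2 t : HYP D rho rho1 rho2 -> D t ->
  deriv_within D (Sq rho rho1) t (dSq rho rho1 rho2 t).
Proof.
  intros [H1 [H2 Hp]] Dt. pose proof (Hp t Dt) as P.
  pose proof (dw_plus _ _ _ _ _ _ (dw_mult _ _ _ _ _ _ (H1 t Dt) (H1 t Dt)) (dw_mult _ _ _ _ _ _ (H2 t Dt) (H2 t Dt))) as HQ.
  assert (Q : 0 < rho t * rho t + rho1 t * rho1 t) by nra.
  pose proof (dw_comp _ sqrt _ _ _ _ Dt (derivable_pt_lim_sqrt _ Q) HQ) as H.
  fin H.
  - unfold dSq, Sq. replace (rho t ^ 2 + rho1 t ^ 2) with (rho t * rho t + rho1 t * rho1 t) by ring.
    pose proof (sqrt_lt_R0 _ Q). field. lra.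
  - intros y _. unfold Sq. f_equal. ring.
  - exact Dt.
Qed.

Lemma d_NX D rho rho1 rho2 t : HYP D rho rho1 rho2 -> D t ->
  deriv_within D (NX rho rho1) t (dNX rho rho1 rho2 t).
Proof.
  intros [H1 [H2 Hp]] Dt.
  pose proof (dw_minus _ _ _ _ _ _ (dw_mult _ _ _ _ _ _ (H1 t Dt) (dw_glob D _ _ _ (derivable_pt_lim_sin t)))
        (dw_mult _ _ _ _ _ _ (H2 t Dt) (dw_glob D _ _ _ (derivable_pt_lim_cos t)))) as H.
  fin H.
  - unfold dNX. ring.
  - intros y _. reflexivity.
  - exact Dt.
Qed.

Lemma d_NY D rho rho1 rho2 t : HYP D rho rho1 rho2 -> D t ->
  deriv_within D (NY rho rho1) t (dNY rho rho1 rho2 t).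
Proof.
  intros [H1 [H2 Hp]] Dt.
  pose proof (dw_plus _ _ _ _ _ _ (dw_mult _ _ _ _ _ _ (H2 t Dt) (dw_glob D _ _ _ (derivable_pt_lim_sin t)))
        (dw_mult _ _ _ _ _ _ (H1 t Dt) (dw_glob D _ _ _ (derivable_pt_lim_cos t)))) as H.
  fin H.
  - unfold dNY. ring.
  - intros y _. reflexivity.
  - exact Dt.
Qed.

Lemma d_divSq D rho rho1 rho2 g lg t : HYP D rho rho1 rho2 -> D t ->
  deriv_within D g t lg ->
  deriv_within D (fun y => g y / Sq rho rho1 y) t
    (lg / Sq rho rho1 t - g t * dSq rho rho1 rho2 t / (Sq rho rho1 t * Sq rho rho1 t)).
Proof.
  intros HH Dt Hg. destruct HH as [H1 [H2 Hp]].
  assert (Nz : forall y, D y -> Sq rho rho1 y <> 0) by (intros y Dy; pose proof (Sq_pos rho rho1 y (Hp y Dy)); lra).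
  pose proof (dw_mult _ _ _ _ _ _ Hg (dw_inv _ _ _ _ Nz (Nz t Dt) (d_Sq D rho rho1 rho2 t (conj H1 (conj H2 Hp)) Dt))) as H.
  fin H.
  - field. apply Nz; auto.
  - intros y _. reflexivity.
  - exact Dt.
Qed.

Definition dnux rho rho1 rho2 t := dNX rho rho1 rho2 t / Sq rho rho1 t - NX rho rho1 t * dSq rho rho1 rho2 t / (Sq rho rho1 t * Sq rho rho1 t).
Definition dnuy rho rho1 rho2 t := dNY rho rho1 rho2 t / Sq rho rho1 t - NY rho rho1 t * dSq rho rho1 rho2 t / (Sq rho rho1 t * Sq rho rho1 t).
Definition dPP rho rho1 rho2 t := rho1 t / Sq rho rho1 t - rho t * dSq rho rho1 rho2 t / (Sq rho rho1 t * Sq rho rho1 t).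
Definition dPh n rho rho1 rho2 t := dPP rho rho1 rho2 t - / (2 * sqrt (n ^ 2 - 1 + PP rho rho1 t ^ 2)) * (2 * PP rho rho1 t * dPP rho rho1 rho2 t).
Definition dmx n rho rho1 rho2 t := (cos t - (dPh n rho rho1 rho2 t * nux rho rho1 t + Ph n rho rho1 t * dnux rho rho1 rho2 t)) / n.
Definition dmy n rho rho1 rho2 t := (- sin t - (dPh n rho rho1 rho2 t * nuy rho rho1 t + Ph n rho rho1 t * dnuy rho rho1 rho2 t)) / n.

Lemma d_nux D rho rho1 rho2 t : HYP D rho rho1 rho2 -> D t ->
  deriv_within D (nux rho rho1) t (dnux rho rho1 rho2 t).
Proof. intros HH Dt. exact (d_divSq D rho rho1 rho2 _ _ t HH Dt (d_NX D rho rho1 rho2 t HH Dt)). Qed.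

Lemma d_nuy D rho rho1 rho2 t : HYP D rho rho1 rho2 -> D t ->
  deriv_within D (nuy rho rho1) t (dnuy rho rho1 rho2 t).
Proof. intros HH Dt. exact (d_divSq D rho rho1 rho2 _ _ t HH Dt (d_NY D rho rho1 rho2 t HH Dt)). Qed.

Lemma d_PP D rho rho1 rho2 t : HYP D rho rho1 rho2 -> D t ->
  deriv_within D (PP rho rho1) t (dPP rho rho1 rho2 t).
Proof. intros HH Dt. destruct HH as [H1 [H2 Hp]].
  exact (d_divSq D rho rho1 rho2 _ _ t (conj H1 (conj H2 Hp)) Dt (H1 t Dt)). Qed.

Lemma d_Ph D n rho rho1 rho2 t : 1 < n -> HYP D rho rho1 rho2 -> D t ->
  deriv_within D (Ph n rho rho1) t (dPh n rho rho1 rho2 t).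
Proof.
  intros Hn HH Dt. pose proof (d_PP D rho rho1 rho2 t HH Dt) as HP.
  pose proof (dw_plus _ _ _ _ _ _ (dw_const D (n ^ 2 - 1) t) (dw_mult _ _ _ _ _ _ HP HP)) as HQ.
  assert (Q : 0 < n ^ 2 - 1 + PP rho rho1 t * PP rho rho1 t) by nra.
  pose proof (dw_minus _ _ _ _ _ _ HP (dw_comp _ sqrt _ _ _ _ Dt (derivable_pt_lim_sqrt _ Q) HQ)) as H.
  fin H.
  - unfold dPh. replace (PP rho rho1 t ^ 2) with (PP rho rho1 t * PP rho rho1 t) by ring. ring.
  - intros y _. unfold Ph. f_equal. f_equal. ring.
  - exact Dt.
Qed.

Lemma d_mx D n rho rho1 rho2 t : 1 < n -> HYP D rho rho1 rho2 -> D t ->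
  deriv_within D (mx n rho rho1) t (dmx n rho rho1 rho2 t).
Proof.
  intros Hn HH Dt.
  pose proof (dw_mult _ _ _ _ _ _ (dw_minus _ _ _ _ _ _ (dw_glob D _ _ _ (derivable_pt_lim_sin t))
     (dw_mult _ _ _ _ _ _ (d_Ph D n rho rho1 rho2 t Hn HH Dt) (d_nux D rho rho1 rho2 t HH Dt)))
     (dw_const D (/ n) t)) as H.
  fin H.
  - unfold dmx. field. lra.
  - intros y _. unfold mx. field. lra.
  - exact Dt.
Qed.

Lemma d_my D n rho rho1 rho2 t : 1 < n -> HYP D rho rho1 rho2 -> D t ->
  deriv_within D (my n rho rho1) t (dmy n rho rho1 rho2 t).
Proof.
  intros Hn HH Dt.
  pose proof (dw_mult _ _ _ _ _ _ (dw_minus _ _ _ _ _ _ (dw_glob D _ _ _ (derivable_pt_lim_cos t))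
     (dw_mult _ _ _ _ _ _ (d_Ph D n rho rho1 rho2 t Hn HH Dt) (d_nuy D rho rho1 rho2 t HH Dt)))
     (dw_const D (/ n) t)) as H.
  fin H.
  - unfold dmy. field. lra.
  - intros y _. unfold my. field. lra.
  - exact Dt.
Qed.

Definition dd n C rho rho1 y := (C - rho y * (1 - cos y)) / (n - my n rho rho1 y).

Lemma d_dd D n C rho rho1 rho2 t : 1 < n -> HYP D rho rho1 rho2 -> D t ->
  exists l, deriv_within D (dd n C rho rho1) t l.
Proof.
  intros Hn HH Dt. pose proof HH as [H1 [H2 Hp]].
  assert (Nz : forall y, D y -> n - my n rho rho1 y <> 0) by (intros y Dy; pose proof (my_lt n rho rho1 y Hn (Hp y Dy)); lra).
  pose proof (dw_minus _ _ _ _ _ _ (dw_const D n t) (d_my D n rho rho1 rho2 t Hn HH Dt)) as Hd.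
  pose proof (dw_mult _ _ _ _ _ _ (dw_minus _ _ _ _ _ _ (dw_const D C t)
      (dw_mult _ _ _ _ _ _ (H1 t Dt) (dw_minus _ _ _ _ _ _ (dw_const D 1 t) (dw_glob D _ _ _ (derivable_pt_lim_cos t)))))
      (dw_inv _ _ _ _ Nz (Nz t Dt) Hd)) as H.
  eexists. eapply dw_ext; [| exact Dt | exact H]. intros y _. reflexivity.
Qed.

Lemma fc_fst n C rho rho1 y : 0 < rho y ->
  fst (fc n C rho rho1 y) = rho y * sin y + dd n C rho rho1 y * mx n rho rho1 y.
Proof. intro H. unfold fc, dc, dd. rewrite mc_eq by auto. reflexivity. Qed.
Lemma fc_snd n C rho rho1 y : 0 < rho y ->
  snd (fc n C rho rho1 y) = rho y * cos y + dd n C rho rho1 y * my n rho rho1 y.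
Proof. intro H. unfold fc, dc, dd. rewrite mc_eq by auto. reflexivity. Qed.
Lemma dc_dd n C rho rho1 y : 0 < rho y -> dc n C rho rho1 y = dd n C rho rho1 y.
Proof. intro H. unfold dc, dd. rewrite mc_eq by auto. reflexivity. Qed.

Lemma perp delta n C rho rho1 rho2 t v1 v2 : 0 < delta -> 1 < n ->
  HYP (Icl delta) rho rho1 rho2 -> Icl delta t ->
  deriv_within (Icl delta) (fun s => fst (fc n C rho rho1 s)) t v1 ->
  deriv_within (Icl delta) (fun s => snd (fc n C rho rho1 s)) t v2 ->
  n * mx n rho rho1 t * v1 + (n * my n rho rho1 t - 1) * v2 = 0.
Proof.
  intros Hdel Hn HH Dt Hv1 Hv2. pose proof HH as [H1 [H2 Hp]].
  set (D := Icl delta) in *.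
  pose proof (d_mx D n rho rho1 rho2 t Hn HH Dt) as Hmx.
  pose proof (d_my D n rho rho1 rho2 t Hn HH Dt) as Hmy.
  destruct (d_dd D n C rho rho1 rho2 t Hn HH Dt) as [ld Hdd].
  pose proof (dw_glob D _ _ _ (derivable_pt_lim_sin t)) as Hs.
  pose proof (dw_glob D _ _ _ (derivable_pt_lim_cos t)) as Hc.
  pose proof (dw_plus _ _ _ _ _ _ (dw_mult _ _ _ _ _ _ (H1 t Dt) Hs) (dw_mult _ _ _ _ _ _ Hdd Hmx)) as Fx.
  pose proof (dw_plus _ _ _ _ _ _ (dw_mult _ _ _ _ _ _ (H1 t Dt) Hc) (dw_mult _ _ _ _ _ _ Hdd Hmy)) as Fy.
  assert (E1 : v1 = rho1 t * sin t + rho t * cos t + (ld * mx n rho rho1 t + dd n C rho rho1 t * dmx n rho rho1 rho2 t)).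
  { apply (dw_unique delta (fun s => fst (fc n C rho rho1 s)) t); auto.
    eapply dw_ext; [| exact Dt | exact Fx]. intros y Dy. cbv beta. rewrite fc_fst; auto. }
  assert (E2 : v2 = rho1 t * cos t + rho t * - sin t + (ld * my n rho rho1 t + dd n C rho rho1 t * dmy n rho rho1 rho2 t)).
  { apply (dw_unique delta (fun s => snd (fc n C rho rho1 s)) t); auto.
    eapply dw_ext; [| exact Dt | exact Fy]. intros y Dy. cbv beta. rewrite fc_snd; auto. }
  pose proof (dw_plus _ _ _ _ _ _ (dw_mult _ _ _ _ _ _ Hmx Hmx) (dw_mult _ _ _ _ _ _ Hmy Hmy)) as U.
  assert (EU : dmx n rho rho1 rho2 t * mx n rho rho1 t + mx n rho rho1 t * dmx n rho rho1 rho2 t +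
               (dmy n rho rho1 rho2 t * my n rho rho1 t + my n rho rho1 t * dmy n rho rho1 rho2 t) = 0).
  { apply (dw_unique delta (fun y => mx n rho rho1 y * mx n rho rho1 y + my n rho rho1 y * my n rho rho1 y) t); auto.
    eapply dw_ext; [| exact Dt | exact (dw_const D 1 t)]. intros y Dy.
    pose proof (m_unit n rho rho1 y Hn (Hp y Dy)). nra. }
  assert (Nz : forall y, D y -> n - my n rho rho1 y <> 0) by (intros y Dy; pose proof (my_lt n rho rho1 y Hn (Hp y Dy)); lra).
  pose proof (dw_plus _ _ _ _ _ _ (dw_mult _ _ _ _ _ _ (H1 t Dt) (dw_minus _ _ _ _ _ _ (dw_const D 1 t) Hc))
     (dw_mult _ _ _ _ _ _ Hdd (dw_minus _ _ _ _ _ _ (dw_const D n t) Hmy))) as I.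
  assert (EI : rho1 t * (1 - cos t) + rho t * (0 - - sin t) + (ld * (n - my n rho rho1 t) + dd n C rho rho1 t * (0 - dmy n rho rho1 rho2 t)) = 0).
  { apply (dw_unique delta (fun y => rho y * (1 - cos y) + dd n C rho rho1 y * (n - my n rho rho1 y)) t); auto.
    eapply dw_ext; [| exact Dt | exact (dw_const D C t)]. intros y Dy.
    unfold dd. field. apply Nz; auto. }
  pose proof (tangent_id n rho rho1 t Hn (Hp t Dt)) as T.
  pose proof (m_unit n rho rho1 t Hn (Hp t Dt)) as MU.
  rewrite E1, E2.
  set (a := mx n rho rho1 t) in *. set (b := my n rho rho1 t) in *.
  set (a' := dmx n rho rho1 rho2 t) in *. set (b' := dmy n rho rho1 rho2 t) in *.
  set (d := dd n C rho rho1 t) in *.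
  transitivity ((n * (a * (rho1 t * sin t + rho t * cos t) + b * (rho1 t * cos t - rho t * sin t)) - rho1 t)
     + n * ld * (a ^ 2 + b ^ 2 - 1) + n * d / 2 * (a' * a + a * a' + (b' * b + b * b'))
     + (rho1 t * (1 - cos t) + rho t * (0 - - sin t) + (ld * (n - b) + d * (0 - b')))); [field|].
  rewrite T, MU, EU, EI. ring.
Qed.

Lemma Sq0 rho rho1 : rho1 0 = 0 -> 0 < rho 0 -> Sq rho rho1 0 = rho 0.
Proof. intros H P. unfold Sq. rewrite H. replace (rho 0 ^ 2 + 0 ^ 2) with (rho 0 * rho 0) by ring.
  apply sqrt_square. lra. Qed.

Lemma vals n rho rho1 rho2 : 1 < n -> rho1 0 = 0 -> 0 < rho 0 ->
  nux rho rho1 0 = 0 /\ nuy rho rho1 0 = 1 /\ PP rho rho1 0 = 1 /\ Ph n rho rho1 0 = 1 - n /\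
  mx n rho rho1 0 = 0 /\ my n rho rho1 0 = 1 /\
  dmx n rho rho1 rho2 0 = (1 - (1 - n) * ((rho 0 - rho2 0) / rho 0)) / n.
Proof.
  intros Hn H P. pose proof (Sq0 rho rho1 H P) as S.
  assert (A : nux rho rho1 0 = 0) by (unfold nux, NX; rewrite S, H, sin_0, cos_0; field; lra).
  assert (B : nuy rho rho1 0 = 1) by (unfold nuy, NY; rewrite S, H, sin_0, cos_0; field; lra).
  assert (C : PP rho rho1 0 = 1) by (unfold PP; rewrite S; field; lra).
  assert (E : Ph n rho rho1 0 = 1 - n).
  { unfold Ph. rewrite C. replace (n ^ 2 - 1 + 1 ^ 2) with (n * n) by ring. rewrite sqrt_square; lra. }
  assert (F : mx n rho rho1 0 = 0) by (unfold mx; rewrite A, E, sin_0; field; lra).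
  assert (G : my n rho rho1 0 = 1) by (unfold my; rewrite B, E, cos_0; field; lra).
  repeat split; auto.
  unfold dmx, dnux, dNX. rewrite A, E, S, H, sin_0, cos_0.
  unfold NX. rewrite H, sin_0, cos_0. field. lra.
Qed.

Lemma final nr nb r d a q : 1 < nr -> nr < nb -> 0 < r -> 0 < d ->
  r + d * ((1 - (1 - nr) * ((r - a) / r)) / nr) = (r + d * ((1 - (1 - nb) * ((r - a) / r)) / nb)) * q ->
  nr * ((1 - (1 - nr) * ((r - a) / r)) / nr) * (nb - 1) = (nr - 1) * nb * ((1 - (1 - nb) * ((r - a) / r)) / nb) * q ->
  r / d <= (DeltaN nr - DeltaN nb) ^ 2 / (4 * DeltaN nr * DeltaN nb).
Proof.
  intros H1 H2 Hr Hd E1 E2. unfold DeltaN.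
  set (Dr := nr / (nr - 1)). set (Db := nb / (nb - 1)).
  set (al := a / r).
  assert (Dr_pos : 0 < Dr) by (unfold Dr; apply Rdiv_lt_0_compat; lra).
  assert (Db_pos : 0 < Db) by (unfold Db; apply Rdiv_lt_0_compat; lra).
  assert (Mr : (1 - (1 - nr) * ((r - a) / r)) / nr = (Dr - al) / Dr) by (unfold Dr, al; field; lra).
  assert (Mb : (1 - (1 - nb) * ((r - a) / r)) / nb = (Db - al) / Db) by (unfold Db, al; field; lra).
  rewrite Mr, Mb in *.
  set (X := Dr - al) in *. set (Y := Db - al) in *.
  assert (XY : X = Y * q).
  { apply Rmult_eq_reg_l with ((nr - 1) * (nb - 1)); [|nra].
    transitivity (nr * (X / Dr) * (nb - 1)); [unfold Dr; field; lra|].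
    rewrite E2. unfold Db; field; lra. }
  assert (Dd : X - Y = Dr - Db) by (unfold X, Y; ring).
  assert (Dne : Dr - Db <> 0).
  { unfold Dr, Db. intro Z. assert (nr * (nb - 1) = nb * (nr - 1)).
    { apply Rmult_eq_reg_r with (/ ((nr - 1) * (nb - 1))). 
      - transitivity (nr / (nr - 1) - nb / (nb - 1) + nb / (nb - 1)); [field; lra|]. rewrite Z. field; lra.
      - apply Rinv_neq_0_compat. nra. }
    nra. }
  assert (K : r * Dr * Db = - d * X * Y).
  {
    assert (E1' : r * (1 - q) * (Dr * Db) = d * Y * q * (Dr - Db)).
    { transitivity ((r + d * (Y * q / Dr) - (r + d * (Y / Db)) * q + d * Y * q * (/ Db - / Dr)) * (Dr * Db)); [field; lra|].
      rewrite <- XY, E1. field. lra. }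
    assert (Yq : Y * (q - 1) = Dr - Db) by (rewrite <- Dd, XY; ring).
    apply Rmult_eq_reg_r with (Dr - Db); auto.
    rewrite <- Yq at 1.
    transitivity (- Y * (r * (1 - q) * (Dr * Db))); [ring|]. rewrite E1'. rewrite XY. ring. }
  assert (PD : 0 < Dr * Db) by (apply Rmult_lt_0_compat; lra).
  apply Rmult_le_reg_r with (4 * Dr * Db * d); [replace (4 * Dr * Db * d) with (4 * (Dr * Db) * d) by ring; apply Rmult_lt_0_compat; lra|].
  replace (r / d * (4 * Dr * Db * d)) with (4 * (r * Dr * Db)) by (field; lra).
  replace ((Dr - Db) ^ 2 / (4 * Dr * Db) * (4 * Dr * Db * d)) with ((Dr - Db) ^ 2 * d) by (field; lra).
  rewrite K. rewrite <- Dd.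
  assert (0 <= d * (X + Y) ^ 2) by (apply Rmult_le_pos; [lra| apply pow2_ge_0]). nra.
Qed.

Lemma alg_cross a1 a2 b1 b2 v1 v2 : a1 * v1 + a2 * v2 = 0 -> b1 * v1 + b2 * v2 = 0 ->
  (v1 <> 0 \/ v2 <> 0) -> a1 * b2 - a2 * b1 = 0.
Proof.
  intros Ha Hb Hv.
  assert (E1 : v1 * (a1 * b2 - a2 * b1) = 0).
  { replace (v1 * (a1 * b2 - a2 * b1)) with (b2 * (a1 * v1 + a2 * v2) - a2 * (b1 * v1 + b2 * v2)) by ring.
    rewrite Ha, Hb. ring. }
  assert (E2 : v2 * (a1 * b2 - a2 * b1) = 0).
  { replace (v2 * (a1 * b2 - a2 * b1)) with (a1 * (b1 * v1 + b2 * v2) - b1 * (a1 * v1 + a2 * v2)) by ring.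
    rewrite Ha, Hb. ring. }
  destruct Hv as [Hv|Hv].
  - destruct (Rmult_integral _ _ E1); [contradiction|auto].
  - destruct (Rmult_integral _ _ E2); [contradiction|auto].
Qed.

Lemma chain_fst delta nr nb Cr Cb rho rho1 phi phi1 t w :
  (forall t, Icl delta t -> Icl delta (phi t)) ->
  (forall t, Icl delta t -> deriv_within (Icl delta) phi t (phi1 t)) ->
  (forall t, Icl delta t -> fc nr Cr rho rho1 t = fc nb Cb rho rho1 (phi t)) -> Icl delta t ->
  deriv_within (Icl delta) (fun s => fst (fc nb Cb rho rho1 s)) (phi t) w ->
  deriv_within (Icl delta) (fun s => fst (fc nr Cr rho rho1 s)) t (w * phi1 t).
Proof.
  intros Hm Hp He Dt Hw.
  pose proof (dw_chain _ _ _ _ _ _ _ Hm Dt Hw (Hp t Dt)) as H.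
  eapply dw_ext; [| exact Dt | exact H]. intros y Dy. cbv beta. rewrite He; auto.
Qed.

Lemma chain_snd delta nr nb Cr Cb rho rho1 phi phi1 t w :
  (forall t, Icl delta t -> Icl delta (phi t)) ->
  (forall t, Icl delta t -> deriv_within (Icl delta) phi t (phi1 t)) ->
  (forall t, Icl delta t -> fc nr Cr rho rho1 t = fc nb Cb rho rho1 (phi t)) -> Icl delta t ->
  deriv_within (Icl delta) (fun s => snd (fc nb Cb rho rho1 s)) (phi t) w ->
  deriv_within (Icl delta) (fun s => snd (fc nr Cr rho rho1 s)) t (w * phi1 t).
Proof.
  intros Hm Hp He Dt Hw.
  pose proof (dw_chain _ _ _ _ _ _ _ Hm Dt Hw (Hp t Dt)) as H.
  eapply dw_ext; [| exact Dt | exact H]. intros y Dy. cbv beta. rewrite He; auto.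
Qed.

Lemma cross_all delta nr nb Cr Cb rho rho1 rho2 phi phi1 t : 0 < delta -> 1 < nr -> 1 < nb ->
  HYP (Icl delta) rho rho1 rho2 ->
  has_normal_everywhere (Icl delta) (fc nr Cr rho rho1) ->
  has_normal_everywhere (Icl delta) (fc nb Cb rho rho1) ->
  (forall t, Icl delta t -> Icl delta (phi t)) ->
  (forall t, Icl delta t -> deriv_within (Icl delta) phi t (phi1 t)) ->
  (forall t, Icl delta t -> fc nr Cr rho rho1 t = fc nb Cb rho rho1 (phi t)) -> Icl delta t ->
  (nr * mx nr rho rho1 t) * (nb * my nb rho rho1 (phi t) - 1)
   - (nr * my nr rho rho1 t - 1) * (nb * mx nb rho rho1 (phi t)) = 0.
Proof.
  intros Hd Hr Hb HH Nr Nb Hm Hp He Dt.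
  destruct (Nr t Dt) as [v1 [v2 [Hv1 [Hv2 Hnz]]]].
  destruct (Nb (phi t) (Hm t Dt)) as [w1 [w2 [Hw1 [Hw2 _]]]].
  pose proof (chain_fst _ _ _ _ _ _ _ _ _ _ _ Hm Hp He Dt Hw1) as C1.
  pose proof (chain_snd _ _ _ _ _ _ _ _ _ _ _ Hm Hp He Dt Hw2) as C2.
  pose proof (dw_unique _ _ _ _ _ Hd Dt Hv1 C1) as E1.
  pose proof (dw_unique _ _ _ _ _ Hd Dt Hv2 C2) as E2.
  pose proof (perp _ _ _ _ _ _ _ _ _ Hd Hr HH Dt Hv1 Hv2) as P1.
  pose proof (perp _ _ _ _ _ _ _ _ _ Hd Hb HH (Hm t Dt) Hw1 Hw2) as P2.
  apply (alg_cross _ _ _ _ v1 v2); auto.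
  rewrite E1, E2.
  transitivity (phi1 t * (nb * mx nb rho rho1 (phi t) * w1 + (nb * my nb rho rho1 (phi t) - 1) * w2)); [ring|].
  rewrite P2. ring.
Qed.

Definition clamp delta t := Rmax (- delta) (Rmin delta t).

Lemma clamp_in delta t : 0 < delta -> Icl delta (clamp delta t).
Proof. intro H. unfold clamp, Icl, Rmax, Rmin. repeat destruct Rle_dec; lra. Qed.

Lemma clamp_id delta t : Icl delta t -> clamp delta t = t.
Proof. unfold clamp, Icl, Rmax, Rmin. intro. repeat destruct Rle_dec; lra. Qed.

Lemma clamp_lip delta x y : 0 < delta -> Rabs (clamp delta y - clamp delta x) <= Rabs (y - x).
Proof.
  intro H. pose proof (Rle_abs (y - x)). pose proof (Rle_abs (- (y - x))). rewrite Rabs_Ropp in *.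
  apply Rabs_le. unfold clamp, Rmax, Rmin. repeat destruct Rle_dec; lra.
Qed.

Lemma fixed_point delta phi phi1 : 0 < delta ->
  (forall t, Icl delta t -> Icl delta (phi t)) ->
  (forall t, Icl delta t -> deriv_within (Icl delta) phi t (phi1 t)) ->
  exists z, Icl delta z /\ phi z = z.
Proof.
  intros Hd Hm Hp.
  assert (Ch : forall x, continuity_pt (fun t => phi (clamp delta t)) x).
  { intros x. set (u := clamp delta x). assert (Du : Icl delta u) by apply clamp_in, Hd.
    pose proof (dw_cont _ _ _ _ (Hp u Du)) as C.
    unfold continuity_pt, continue_in, limit1_in, limit_in. intros eps He.
    destruct (C eps He) as [alp [Ha H]]. exists alp. split; auto.
    intros y [_ Hy]. simpl in *. unfold R_dist in *.
    destruct (Req_dec (clamp delta y) u) as [E|N].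
    - rewrite E. unfold u. rewrite Rminus_diag, Rabs_R0. lra.
    - apply H. split. split; auto. apply clamp_in; auto.
      pose proof (clamp_lip delta x y Hd). unfold u. lra. }
  assert (Cg : continuity (fun t => phi (clamp delta t) - t)).
  { intro x. apply (continuity_pt_minus (fun t => phi (clamp delta t)) (fun t => t)); auto.
    apply derivable_continuous_pt. apply derivable_pt_id. }
  assert (Dm : Icl delta (- delta)) by (unfold Icl; lra).
  assert (Dp : Icl delta delta) by (unfold Icl; lra).
  destruct (IVT_cor _ (- delta) delta Cg) as [z [Hz Ez]].
  - lra.
  - rewrite !clamp_id by auto. pose proof (Hm _ Dm). pose proof (Hm _ Dp). unfold Icl in *.
    assert (0 <= phi (- delta) - - delta) by lra. assert (phi delta - delta <= 0) by lra.
    nra.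
  - exists z. assert (Dz : Icl delta z) by (unfold Icl; lra). split; auto.
    rewrite clamp_id in Ez by auto. lra.
Qed.

Lemma sin0_inv z delta : Icl delta z -> delta < PI / 2 -> sin z = 0 -> z = 0.
Proof.
  intros [H1 H2] Hd Hs. pose proof PI_RGT_0.
  destruct (Rtotal_order z 0) as [L|[E|G]]; auto.
  - pose proof (sin_gt_0 (- z)). rewrite sin_neg in H0. lra.
  - pose proof (sin_gt_0 z). lra.
Qed.

Lemma at_zero delta nr nb Cr Cb rho rho1 rho2 phi phi1 : 0 < delta -> delta < PI / 2 -> 1 < nr -> nr < nb ->
  HYP (Icl delta) rho rho1 rho2 ->
  (forall t, Icl delta t -> 0 < dc nr Cr rho rho1 t) ->
  (forall t, Icl delta t -> 0 < dc nb Cb rho rho1 t) ->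
  has_normal_everywhere (Icl delta) (fc nr Cr rho rho1) ->
  has_normal_everywhere (Icl delta) (fc nb Cb rho rho1) ->
  (forall t, Icl delta t -> Icl delta (phi t)) ->
  (forall t, Icl delta t -> deriv_within (Icl delta) phi t (phi1 t)) ->
  (forall t, Icl delta t -> fc nr Cr rho rho1 t = fc nb Cb rho rho1 (phi t)) ->
  phi 0 = 0 /\ rho1 0 = 0 /\ dd nr Cr rho rho1 0 = dd nb Cb rho rho1 0.
Proof.
  intros Hd HdP Hr Hrb HH Pr Pb Nr Nb Hm Hp He.
  pose proof HH as [_ [_ Hpos]].
  destruct (fixed_point delta phi phi1 Hd Hm Hp) as [z [Dz Fz]].
  pose proof (cross_all delta nr nb Cr Cb rho rho1 rho2 phi phi1 z Hd Hr ltac:(lra) HH Nr Nb Hm Hp He Dz) as Cz.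
  rewrite Fz in Cz.
  pose proof (He z Dz) as Ez. rewrite Fz in Ez.
  pose proof (Hpos z Dz) as Pz.
  assert (E1 := f_equal fst Ez). assert (E2 := f_equal snd Ez).
  rewrite !fc_fst in E1 by auto. rewrite !fc_snd in E2 by auto.
  pose proof (Pr z Dz) as Dr. pose proof (Pb z Dz) as Db. rewrite dc_dd in Dr, Db by auto.
  pose proof (m_unit nr rho rho1 z Hr Pz) as Ur. pose proof (m_unit nb rho rho1 z ltac:(lra) Pz) as Ub.
  set (dr := dd nr Cr rho rho1 z) in *. set (db := dd nb Cb rho rho1 z) in *.
  set (ar := mx nr rho rho1 z) in *. set (br := my nr rho rho1 z) in *.
  set (ab := mx nb rho rho1 z) in *. set (bb := my nb rho rho1 z) in *.
  assert (X1 : dr * ar = db * ab) by lra. assert (X2 : dr * br = db * bb) by lra.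
  assert (Dsq : dr * dr = db * db).
  { transitivity ((dr * ar) ^ 2 + (dr * br) ^ 2). { replace ((dr * ar) ^ 2 + (dr * br) ^ 2) with (dr * dr * (ar ^ 2 + br ^ 2)) by ring. rewrite Ur. ring. }
    rewrite X1, X2. replace ((db * ab) ^ 2 + (db * bb) ^ 2) with (db * db * (ab ^ 2 + bb ^ 2)) by ring. rewrite Ub. ring. }
  assert (Deq : dr = db) by nra.
  assert (Aeq : ar = ab). { rewrite Deq in X1. apply Rmult_eq_reg_l with db; lra. }
  assert (Beq : br = bb). { rewrite Deq in X2. apply Rmult_eq_reg_l with db; lra. }
  assert (A0 : ar = 0).
  { rewrite <- Aeq, <- Beq in Cz.
    assert (ar * (nb - nr) = 0) by (rewrite <- Cz; ring).
    destruct (Rmult_integral _ _ H); [auto| lra]. }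
  assert (Ab0 : ab = 0) by lra.
  unfold ar in A0. unfold ab in Ab0. unfold mx in A0, Ab0.
  assert (S1 : sin z = Ph nr rho rho1 z * nux rho rho1 z).
  { assert (sin z - Ph nr rho rho1 z * nux rho rho1 z = 0).
    { apply Rmult_eq_reg_r with (/ nr). rewrite Rmult_0_l. exact A0. apply Rinv_neq_0_compat; lra. }
    lra. }
  assert (S2 : sin z = Ph nb rho rho1 z * nux rho rho1 z).
  { assert (sin z - Ph nb rho rho1 z * nux rho rho1 z = 0).
    { apply Rmult_eq_reg_r with (/ nb). rewrite Rmult_0_l. exact Ab0. apply Rinv_neq_0_compat; lra. }
    lra. }
  assert (PhN : Ph nr rho rho1 z - Ph nb rho rho1 z <> 0).
  { unfold Ph. pose proof (PP_bounds rho rho1 z Pz).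
    pose proof (sqrt_lt_1 (nr ^ 2 - 1 + PP rho rho1 z ^ 2) (nb ^ 2 - 1 + PP rho rho1 z ^ 2)).
    assert (nr ^ 2 < nb ^ 2) by nra.
    assert (0 <= nr ^ 2 - 1 + PP rho rho1 z ^ 2) by nra. lra. }
  assert (N0 : nux rho rho1 z = 0).
  { assert ((Ph nr rho rho1 z - Ph nb rho rho1 z) * nux rho rho1 z = 0) by lra.
    destruct (Rmult_integral _ _ H); [contradiction|auto]. }
  assert (Z : z = 0) by (apply (sin0_inv z delta Dz HdP); rewrite S1, N0; ring).
  subst z.
  split; auto. split.
  - unfold nux, NX in N0. rewrite sin_0, cos_0 in N0.
    pose proof (Sq_pos rho rho1 0 Pz).
    assert (rho 0 * 0 - rho1 0 * 1 = 0).
    { apply Rmult_eq_reg_r with (/ Sq rho rho1 0). rewrite Rmult_0_l. exact N0. apply Rinv_neq_0_compat; lra. }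
    lra.
  - exact Deq.
Qed.

Lemma d_fx D n C rho rho1 rho2 t : 1 < n -> HYP D rho rho1 rho2 -> D t ->
  exists ld, deriv_within D (fun s => fst (fc n C rho rho1 s)) t
    (rho1 t * sin t + rho t * cos t + (ld * mx n rho rho1 t + dd n C rho rho1 t * dmx n rho rho1 rho2 t)).
Proof.
  intros Hn HH Dt. pose proof HH as [H1 [H2 Hp]].
  pose proof (d_mx D n rho rho1 rho2 t Hn HH Dt) as Hmx.
  destruct (d_dd D n C rho rho1 rho2 t Hn HH Dt) as [ld Hdd].
  pose proof (dw_glob D _ _ _ (derivable_pt_lim_sin t)) as Hs.
  pose proof (dw_plus _ _ _ _ _ _ (dw_mult _ _ _ _ _ _ (H1 t Dt) Hs) (dw_mult _ _ _ _ _ _ Hdd Hmx)) as Fx.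
  exists ld. eapply dw_ext; [| exact Dt | exact Fx]. intros y Dy. cbv beta. rewrite fc_fst; auto.
Qed.

Theorem corollary5p8 (nr nb : R) (Hn : 1 < nr /\ nr < nb)
  (delta : R) (rho rho1 rho2 : R -> R) (Cr Cb : R) (phi phi1 : R -> R) :
  local_solution nr nb delta rho rho1 rho2 Cr Cb phi phi1 ->
  rho 0 / dc nr Cr rho rho1 0 <=
    (DeltaN nr - DeltaN nb) ^ 2 / (4 * DeltaN nr * DeltaN nb).
Proof.
  intros [[Hd HdP] [Hpos [[Hr1 [Hr2 _]] [Pr [Pb [Nr [Nb [Hm [[Hp _] He]]]]]]]]].
  destruct Hn as [Hnr Hnb].
  assert (HH : HYP (Icl delta) rho rho1 rho2) by (split; [|split]; auto).
  set (D := Icl delta) in *.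
  assert (D0 : D 0) by (unfold D, Icl; lra).
  destruct (at_zero delta nr nb Cr Cb rho rho1 rho2 phi phi1 Hd HdP Hnr Hnb HH Pr Pb Nr Nb Hm Hp He)
    as [F0 [R0 Dq]].
  pose proof (Hpos 0 D0) as P0.
  destruct (vals nr rho rho1 rho2 Hnr R0 P0) as [_ [_ [_ [_ [Mxr [Myr Dmr]]]]]].
  destruct (vals nb rho rho1 rho2 ltac:(lra) R0 P0) as [_ [_ [_ [_ [Mxb [Myb Dmb]]]]]].
  assert (Cmxb : deriv_within D (mx nb rho rho1) (phi 0) (dmx nb rho rho1 rho2 0)) by (rewrite F0; apply d_mx; auto; lra).
  assert (Cmyb : deriv_within D (my nb rho rho1) (phi 0) (dmy nb rho rho1 rho2 0)) by (rewrite F0; apply d_my; auto; lra).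
  pose proof (dw_chain _ _ _ _ _ _ _ Hm D0 Cmxb (Hp 0 D0)) as Kxb.
  pose proof (dw_chain _ _ _ _ _ _ _ Hm D0 Cmyb (Hp 0 D0)) as Kyb.
  pose proof (d_mx D nr rho rho1 rho2 0 Hnr HH D0) as Kxr.
  pose proof (d_my D nr rho rho1 rho2 0 Hnr HH D0) as Kyr.
  pose proof (dw_minus _ _ _ _ _ _
     (dw_mult _ _ _ _ _ _ (dw_mult _ _ _ _ _ _ (dw_const D nr 0) Kxr)
         (dw_minus _ _ _ _ _ _ (dw_mult _ _ _ _ _ _ (dw_const D nb 0) Kyb) (dw_const D 1 0)))
     (dw_mult _ _ _ _ _ _ (dw_minus _ _ _ _ _ _ (dw_mult _ _ _ _ _ _ (dw_const D nr 0) Kyr) (dw_const D 1 0))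
         (dw_mult _ _ _ _ _ _ (dw_const D nb 0) Kxb))) as KK.
  assert (KE : deriv_within D (fun y => (nr * mx nr rho rho1 y) * (nb * my nb rho rho1 (phi y) - 1)
      - (nr * my nr rho rho1 y - 1) * (nb * mx nb rho rho1 (phi y))) 0 0).
  { eapply dw_ext; [| exact D0 | exact (dw_const D 0 0)]. intros y Dy.
    symmetry. apply (cross_all delta nr nb Cr Cb rho rho1 rho2 phi phi1 y); auto; lra. }
  pose proof (dw_unique delta _ _ _ _ Hd D0 KK KE) as KU. cbv beta in KU. rewrite F0, Mxr, Myr, Mxb, Myb in KU.
  assert (Eq2 : nr * dmx nr rho rho1 rho2 0 * (nb - 1) = (nr - 1) * nb * dmx nb rho rho1 rho2 0 * phi1 0).
  { ring_simplify in KU. lra. }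
  destruct (d_fx D nr Cr rho rho1 rho2 0 Hnr HH D0) as [ldr Fr].
  assert (Fb : exists ldb, deriv_within D (fun s => fst (fc nb Cb rho rho1 s)) (phi 0)
    (rho1 0 * sin 0 + rho 0 * cos 0 + (ldb * mx nb rho rho1 0 + dd nb Cb rho rho1 0 * dmx nb rho rho1 rho2 0))).
  { rewrite F0. apply d_fx; auto; lra. }
  destruct Fb as [ldb Fb].
  pose proof (chain_fst _ _ _ _ _ _ _ _ _ _ _ Hm Hp He D0 Fb) as Fc.
  pose proof (dw_unique delta _ _ _ _ Hd D0 Fr Fc) as Eq1.
  rewrite R0, sin_0, cos_0, Mxr, Mxb, <- Dq in Eq1.
  pose proof (Pr 0 D0) as Pd. rewrite dc_dd in * by auto.
  rewrite Dmr, Dmb in *.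
  apply (final nr nb (rho 0) (dd nr Cr rho rho1 0) (rho2 0) (phi1 0)); auto.
  - replace (rho 0 + dd nr Cr rho rho1 0 * ((1 - (1 - nr) * ((rho 0 - rho2 0) / rho 0)) / nr)) with (0 * 0 + rho 0 * 1 + (ldr * 0 + dd nr Cr rho rho1 0 * ((1 - (1 - nr) * ((rho 0 - rho2 0) / rho 0)) / nr))) by ring. rewrite Eq1. ring.
Qed.
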